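(* Let $m>0$, $a_1,a_2\in\mathbb{R}$, $b_0,b_1,b_2\in\mathbb{R}\setminus\{0\}$. Suppose the equation $$\gamma(a_1-\gamma)(a_2-\gamma)J(\gamma)=b_0+b_1\gamma+b_2\gamma^2,\qquad\gamma\in D,$$ has exactly three distinct solutions $\gamma_0,\gamma_1,\gamma_2\in D$. Set $\beta_0=-\gamma_0\gamma_1\gamma_2$, $\beta_1=\gamma_0\gamma_1+\gamma_0\gamma_2+\gamma_1\gamma_2$, $\beta_2=-(\gamma_0+\gamma_1+\gamma_2)$. Then $\beta_0,\beta_1,\beta_2\in\mathbb{R}$; the polynomial $P(M)=M^3+\beta_2M^2+\beta_1M+\beta_0$ has no zeros in $[4m^2,\infty)$; and the functions $\mathfrak h_0,\mathfrak h_1,\mathfrak h_2\in W^{2,2}(\mathbb R)\subset C^1(\mathbb R)$ defined (via Fourier transform, $M=p^2+4m^2$) by $$b_2\hat{\mathfrak h}_2=\Big(\frac{M(M-a_1)(M-a_2)}{P(M)}-1\Big)\hat{\check\rho},\quad b_1\hat{\mathfrak h}_1=-\frac{M\beta_1+\beta_0}{M^2}(\hat{\check\rho}+b_2\hat{\mathfrak h}_2)+\frac{a_1a_2}{M}\hat{\check\rho},\quad b_0\hat{\mathfrak h}_0=-\frac{\beta_0}{M}(\hat{\check\rho}+b_2\hat{\mathfrak h}_2)$$ satisfy $\mathfrak h_0(0)=\mathfrak h_1(0)=\mathfrak h_2(0)=1$.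
   Context: $\rho(M)=\frac{1}{16\pi^2}\sqrt{1-\frac{4m^2}{M}}\frac1M$ for $M\ge4m^2$; $\check\rho(z)=\int_{\mathbb{R}}\rho(p^2+4m^2)|p|e^{\mathrm ipz}dp$; Fourier transform $\hat f(p)=\int e^{-\mathrm ipz}f(z)dz$. $J(z):=\int_{4m^2}^\infty\frac{\rho(M)}{M-z}dM$ for $z\in D:=\{z\in\mathbb{C}:\ \mathrm{Im}\,z\ne0\}\cup\{z\in\mathbb{R}: z<4m^2\}$. *)

(* Defs.v *)
From Stdlib Require Import Reals.
From Coquelicot Require Import Coquelicot.
Open Scope R_scope.

Definition rho (m M : R) : R :=
  if Rle_dec (4 * m ^ 2) M then
    / (16 * PI ^ 2) * sqrt (1 - 4 * m ^ 2 / M) * / M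
  else 0.

Definition inD (m : R) (z : C) : Prop :=
  Im z <> 0 \/ (Im z = 0 /\ Re z < 4 * m ^ 2).

Definition J (m : R) (z : C) : C :=
  @RInt_gen C_R_CompleteNormedModule
    (fun M : R => (RtoC (rho m M) / (RtoC M - z))%C)
    (at_point (4 * m ^ 2)) (Rbar_locally p_infty).

(* Fourier transform of rho_check, \hat{\check\rho}(p) = 2 pi rho(p^2+4m^2)|p|
   (with \hat f(p) = \int e^{-ipz} f(z) dz and
   \check\rho(z) = \int rho(p^2+4m^2)|p| e^{ipz} dp) *)
Definition rhocheck_hat (m p : R) : R :=
  2 * PI * (rho m (p ^ 2 + 4 * m ^ 2) * Rabs p).

Definition Pcub (be0 be1 be2 M : R) : R :=
  M ^ 3 + be2 * M ^ 2 + be1 * M + be0.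

Definition h2_hat (m a1 a2 b2 be0 be1 be2 p : R) : R :=
  let M := p ^ 2 + 4 * m ^ 2 in
  / b2 * ((M * (M - a1) * (M - a2) / Pcub be0 be1 be2 M - 1) * rhocheck_hat m p).

Definition h1_hat (m a1 a2 b1 b2 be0 be1 be2 p : R) : R :=
  let M := p ^ 2 + 4 * m ^ 2 in
  / b1 * (- ((M * be1 + be0) / M ^ 2)
            * (rhocheck_hat m p + b2 * h2_hat m a1 a2 b2 be0 be1 be2 p)
          + a1 * a2 / M * rhocheck_hat m p).

Definition h0_hat (m a1 a2 b0 b2 be0 be1 be2 p : R) : R :=
  let M := p ^ 2 + 4 * m ^ 2 in
  / b0 * (- (be0 / M)
            * (rhocheck_hat m p + b2 * h2_hat m a1 a2 b2 be0 be1 be2 p)).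

(* the function h with Fourier transform fh lies in W^{2,2}(R):
   (1+p^2) \hat h(p) is square integrable (Plancherel) *)
Definition in_W22_fourier (fh : R -> R) : Prop :=
  ex_RInt_gen (fun p : R => (1 + p ^ 2) ^ 2 * fh p ^ 2)
    (Rbar_locally m_infty) (Rbar_locally p_infty).

(* the inverse Fourier transform of fh at z has value v:
   h(z) = (1/2pi) \int \hat h(p) e^{ipz} dp = v *)
Definition inv_fourier_at (fh : R -> R) (z : R) (v : C) : Prop :=
  @is_RInt_gen C_R_NormedModule
    (fun p : R => (RtoC (fh p / (2 * PI)) * (cos (p * z), sin (p * z)))%C)
    (Rbar_locally m_infty) (Rbar_locally p_infty) v.

(* Main.v *)
Require Import Defs.
From Stdlib Require Import Reals Lra Lia Psatz.
From Coquelicot Require Import Coquelicot.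
Open Scope R_scope.


Lemma minus_plus_l' {G : AbelianGroup} (x y : G) : minus (plus x y) x = y.
Proof. unfold minus. rewrite plus_comm, plus_assoc, plus_opp_l, plus_zero_l. reflexivity. Qed.

Lemma cont_Kx2 K x : x <> 0 -> continuous (fun x => K / x^2) x.
Proof. intros. apply (@ex_derive_continuous R_AbsRing R_NormedModule). auto_derive. auto. Qed.

Section Gen.
Context {V : CompleteNormedModule R_AbsRing}.

Lemma gen_of_lim (f : R -> V) (a : R) (F : (R -> Prop) -> Prop) {FF : Filter F} (l : V) :
  F (fun b => ex_RInt f a b) ->
  filterlim (fun b => RInt f a b) F (locally l) ->
  is_RInt_gen f (at_point a) F l.
Proof.
  intros Hex Hlim P HP.
  unfold filtermapi.
  apply (Filter_prod _ _ _ (fun x => x = a) (fun b => ex_RInt f a b /\ P (RInt f a b))).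
  - reflexivity.
  - apply filter_and; [exact Hex | apply Hlim; exact HP].
  - intros x y -> [H1 H2]. exists (RInt f a y). split; [apply RInt_correct; exact H1 | exact H2].
Qed.

Lemma lim_of_gen (f : R -> V) (a : R) (F : (R -> Prop) -> Prop) {FF : Filter F} (l : V) :
  is_RInt_gen f (at_point a) F l -> filterlim (fun b => RInt f a b) F (locally l).
Proof.
  intros H P HP. specialize (H P HP). destruct H as [Q R HQ HR HQR].
  unfold filtermap. apply filter_imp with R; [|exact HR].
  intros y Hy. destruct (HQR a y HQ Hy) as [v [Hv Pv]]. simpl in Hv.
  now rewrite (is_RInt_unique _ _ _ _ Hv).
Qed.

Lemma cmp_ex (f : R -> V) (a K : R) : 0 < a ->
  (forall b, a <= b -> ex_RInt f a b) ->
  (forall x, a <= x -> norm (f x) <= K / x^2) ->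
  ex_RInt_gen f (at_point a) (Rbar_locally p_infty).
Proof.
  intros Ha Hex Hb.
  assert (HK : 0 <= K).
  { assert (H0 := Hb a (Rle_refl a)). assert (0 <= norm (f a)) by apply norm_ge_0.
    assert (0 < a ^ 2) by (apply pow_lt; lra).
    apply Rmult_le_reg_r with (/ a ^ 2). apply Rinv_0_lt_compat; lra. rewrite Rmult_0_l. unfold Rdiv in H0. lra. }
  set (Fl := filtermap (fun b => RInt f a b) (Rbar_locally p_infty)).
  assert (PF : ProperFilter Fl) by (apply filtermap_proper_filter; apply Rbar_locally_filter).
  assert (HC : cauchy Fl).
  { intros eps.
    set (N := a + Rabs K / eps + 1).
    assert (HN : a < N) by (unfold N; assert (0 <= Rabs K / eps) by (apply Rdiv_le_0_compat; [apply Rabs_pos| apply cond_pos]); lra).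
    exists (RInt f a N). unfold Fl, filtermap. exists N. intros b Hb'.
    apply (@norm_compat1 R_AbsRing V).
    rewrite <- (RInt_Chasles f a N b); [| apply Hex; lra | apply (ex_RInt_Chasles_2 f a); [lra| apply Hex; lra]].
    apply Rle_lt_trans with (norm (RInt f N b)); [right; f_equal; exact (@minus_plus_l' (NormedModule.AbelianGroup R_AbsRing (CompleteNormedModule.NormedModule R_AbsRing V)) _ _) |].
    apply Rle_lt_trans with (K / N - K / b).
    - apply (@norm_RInt_le V f (fun x => K / x ^ 2) N b); [lra| intros x Hx; apply Hb; lra | apply (@RInt_correct V); apply (ex_RInt_Chasles_2 f a); [lra| apply Hex; lra] |].
      replace (K / N - K / b) with (minus ((fun x => - K / x) b) ((fun x => - K / x) N)) by (unfold minus, plus, opp; simpl; field; lra).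
      apply (@is_RInt_derive R_CompleteNormedModule (fun x => - K / x)).
      + intros x Hx. rewrite Rmin_left in Hx by lra. rewrite Rmax_right in Hx by lra.
        auto_derive; [lra|]. field. lra.
      + intros x Hx. rewrite Rmin_left in Hx by lra. rewrite Rmax_right in Hx by lra.
        apply cont_Kx2. lra.
    - assert (0 < N) by lra. assert (0 < b) by lra.
      assert (0 <= K / b) by (apply Rdiv_le_0_compat; lra).
      apply Rle_lt_trans with (K / N); [lra|].
      assert (0 < eps) by apply cond_pos.
      apply Rmult_lt_reg_r with N; [lra|]. unfold Rdiv. rewrite Rmult_assoc, Rinv_l, Rmult_1_r by lra.
      unfold N. rewrite Rabs_right by lra.
      assert (E : eps * (K * / eps) = K) by (field; lra).
      assert (0 < eps * a) by (apply Rmult_lt_0_compat; lra). nra. }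
  assert (Hl : filterlim (fun b => RInt f a b) (Rbar_locally p_infty) (locally (lim Fl))).
  { intros P [eps Heps]. apply filter_imp with (2 := complete_cauchy Fl PF HC eps). exact Heps. }
  exists (lim Fl). apply gen_of_lim; [apply Rbar_locally_filter | | exact Hl].
  exists a. intros x Hx. apply Hex. lra.
Qed.

Lemma RInt_even_neg (f : R -> V) b : (forall x, f (-x) = f x) -> (forall b, ex_RInt f 0 b) ->
  RInt f 0 b = opp (RInt f 0 (-b)).
Proof.
  intros Hev Hex.
  assert (H1 : is_RInt (fun y => opp (f (- y))) 0 b (RInt f 0 (- b))).
  { apply (@is_RInt_comp_opp V). rewrite Ropp_0. apply (@RInt_correct V), Hex. }
  assert (H1' : is_RInt (fun y => opp (f y)) 0 b (RInt f 0 (- b))).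
  { apply (@is_RInt_ext V) with (2 := H1). intros; now rewrite Hev. }
  assert (H2 : is_RInt (fun y => opp (f y)) 0 b (opp (RInt f 0 b))).
  { apply (@is_RInt_opp V). apply (@RInt_correct V), Hex. }
  assert (E := @is_RInt_unique V _ _ _ _ H1').
  assert (E2 := @is_RInt_unique V _ _ _ _ H2).
  rewrite E in E2. rewrite E2. symmetry. apply opp_opp.
Qed.

Lemma even_gen (f : R -> V) (l : V) : (forall x, f (-x) = f x) -> (forall b, ex_RInt f 0 b) ->
  is_RInt_gen f (at_point 0) (Rbar_locally p_infty) l ->
  is_RInt_gen f (Rbar_locally m_infty) (Rbar_locally p_infty) (plus l l).
Proof.
  intros Hev Hex H.
  apply (@is_RInt_gen_Chasles V) with 0; [apply Rbar_locally_filter|apply Rbar_locally_filter| |exact H].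
  assert (H3 : is_RInt_gen f (at_point 0) (Rbar_locally m_infty) (opp l)).
  { apply gen_of_lim; [apply Rbar_locally_filter| exists 0; intros; apply Hex |].
    apply (filterlim_ext (fun b => opp (RInt f 0 (- b)))).
    { intros b. symmetry. apply RInt_even_neg; assumption. }
    apply filterlim_comp with (locally l); [| apply (@filterlim_opp R_AbsRing V)].
    apply filterlim_comp with (Rbar_locally p_infty).
    - apply (filterlim_Rbar_opp m_infty).
    - apply lim_of_gen; [apply Rbar_locally_filter | exact H]. }
  assert (H4 := @is_RInt_gen_swap V (Rbar_locally m_infty) (at_point 0) _ _ f _ H3).
  rewrite opp_opp in H4. exact H4.
Qed.

End Gen.

Lemma gen_map {U W : NormedModule R_AbsRing} (f : R -> U) (g : R -> W) (phi : U -> W)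
  Fa Fb {FFa : Filter Fa} {FFb : Filter Fb} (l : U) :
  (forall a b y, is_RInt f a b y -> is_RInt g a b (phi y)) -> continuous phi l ->
  is_RInt_gen f Fa Fb l -> is_RInt_gen g Fa Fb (phi l).
Proof.
  intros Hm Hc H P HP. apply Hc in HP. specialize (H _ HP). unfold filtermapi in *.
  apply filter_imp with (2 := H). intros [x y] [v [Hv Pv]]. exists (phi v). split; auto.
Qed.


Lemma Cmod_ge_of_sq (u v t : R) : 0 <= t -> t^2 <= u^2 + v^2 -> t <= Cmod (u, v).
Proof. intros Ht H. unfold Cmod; simpl. rewrite <- (sqrt_pow2 t Ht). apply sqrt_le_1_alt. simpl in *. lra. Qed.

Lemma inD_sep m g : 0 < m -> inD m g ->
  exists d, 0 < d /\ forall M, 4*m^2 <= M -> d * M <= Cmod (RtoC M - g).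
Proof.
  intros Hm HD. assert (H4 : 0 < 4 * m ^ 2) by (apply Rmult_lt_0_compat; [lra| apply pow_lt; lra]).
  destruct g as [x y]. unfold inD in HD; simpl in HD.
  unfold RtoC, Cminus, Cplus, Copp; simpl.
  destruct HD as [Hy | [Hy Hx]].
  - set (c := 2 * Rabs x + 1).
    assert (Hax := Rabs_pos x).
    assert (Hc : 0 < c) by (unfold c; lra).
    assert (Hay : 0 < Rabs y) by (apply Rabs_pos_lt; auto).
    assert (Hyc : 0 < Rabs y / c) by (apply Rdiv_lt_0_compat; lra).
    exists (Rmin (1/2) (Rabs y / c)). split. { apply Rmin_pos; lra. }
    intros M HM. assert (HM0 : 0 < M) by lra.
    assert (Hd1 := Rmin_l (1/2) (Rabs y / c)). assert (Hd2 := Rmin_r (1/2) (Rabs y / c)).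
    assert (Hd0 : 0 < Rmin (1/2) (Rabs y / c)) by (apply Rmin_pos; lra).
    set (d := Rmin (1/2) (Rabs y / c)) in *.
    apply Cmod_ge_of_sq. { apply Rmult_le_pos; lra. }
    destruct (Rle_dec c M) as [HcM|HcM].
    + assert (Hx1 : x <= Rabs x) by apply Rle_abs.
      assert (M + - x >= M / 2) by (unfold c in HcM; lra).
      assert (d * M <= M / 2) by nra.
      assert (0 <= (0 + - y)^2) by apply pow2_ge_0.
      assert ((d*M)^2 <= (M/2)^2) by (apply pow_incr; split; nra).
      assert ((M/2)^2 <= (M + - x)^2) by (apply pow_incr; lra).
      lra.
    + assert (d * M <= Rabs y / c * M) by nra.
      assert (Rabs y / c * M < Rabs y).
      { unfold Rdiv. rewrite Rmult_assoc. rewrite <- (Rmult_1_r (Rabs y)) at 2.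
        apply Rmult_lt_compat_l; [lra|]. apply Rmult_lt_reg_l with c; [lra|].
        rewrite <- Rmult_assoc, Rinv_r by lra. lra. }
      assert ((0 + - y)^2 = Rabs y ^ 2) by (rewrite <- pow2_abs; f_equal; rewrite Rplus_0_l, Rabs_Ropp; reflexivity).
      assert (0 <= (M + - x)^2) by apply pow2_ge_0.
      assert (0 <= d * M) by nra.
      assert ((d*M)^2 <= (Rabs y)^2) by (apply pow_incr; split; lra).
      lra.
  - exists (1 - Rmax 0 x / (4 * m ^ 2)). split.
    + assert (Rmax 0 x < 4 * m ^ 2) by (apply Rmax_lub_lt; lra).
      assert (Rmax 0 x / (4 * m ^ 2) < 1).
      { apply Rmult_lt_reg_r with (4 * m ^ 2); [lra|]. unfold Rdiv. rewrite Rmult_assoc, Rinv_l by lra. lra. }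
      lra.
    + intros M HM. apply Cmod_ge_of_sq.
      * assert (Rmax 0 x < 4 * m ^ 2) by (apply Rmax_lub_lt; lra).
        assert (Rmax 0 x / (4 * m ^ 2) < 1).
        { apply Rmult_lt_reg_r with (4 * m ^ 2); [lra|]. unfold Rdiv. rewrite Rmult_assoc, Rinv_l by lra. lra. }
        nra.
      * rewrite Hy. 
        assert (Rmax 0 x < 4 * m ^ 2) by (apply Rmax_lub_lt; lra).
        assert (Rmax 0 x / (4 * m ^ 2) < 1).
        { apply Rmult_lt_reg_r with (4 * m ^ 2); [lra|]. unfold Rdiv. rewrite Rmult_assoc, Rinv_l by lra. lra. }
        assert (E : (1 - Rmax 0 x / (4 * m ^ 2)) * M = M - Rmax 0 x * (M / (4 * m ^ 2))) by (field; lra).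
        assert (HMm : 1 <= M / (4 * m ^ 2)).
        { apply Rmult_le_reg_r with (4 * m ^ 2); [lra|]. unfold Rdiv. rewrite Rmult_assoc, Rinv_l by lra. lra. }
        assert (x <= Rmax 0 x * (M / (4 * m ^ 2))).
        { destruct (Rle_dec x 0). { assert (0 <= Rmax 0 x) by apply Rmax_l. nra. }
          rewrite Rmax_right by lra. nra. }
        assert (0 <= (1 - Rmax 0 x / (4 * m ^ 2)) * M) by nra.
        nra.
Qed.


Lemma ball_R x e y : ball x e y -> Rabs (y - x) < e.
Proof. intro H. exact H. Qed.

Lemma locally_pos M : 0 < M -> locally M (fun y => 0 < y).
Proof.
  intros HM. assert (H2 : 0 < M / 2) by lra.
  exists (mkposreal _ H2). intros y Hy. apply ball_R in Hy. simpl in Hy.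
  apply Rabs_def2 in Hy. lra.
Qed.

Lemma rho_pos m M : 0 < M -> rho m M = / (16 * PI ^ 2) * sqrt (1 - 4 * m ^ 2 / M) * / M.
Proof.
  intros HM. unfold rho. destruct (Rle_dec (4*m^2) M) as [H|H]; [reflexivity|].
  rewrite sqrt_neg_0; [ring|].
  assert (4 * m ^ 2 / M * M = 4 * m ^ 2) by (field; lra).
  assert (1 <= 4 * m ^ 2 / M) by nra. lra.
Qed.

Lemma rho_zero m M : M < 4 * m ^ 2 -> rho m M = 0.
Proof. intros H. unfold rho. destruct (Rle_dec (4*m^2) M); [lra|reflexivity]. Qed.

Lemma PI2_pos : 0 < 16 * PI ^ 2.
Proof. assert (H := PI_RGT_0). nra. Qed.

Lemma rho_bounds m M : 0 < M -> 0 <= rho m M <= / (16 * PI ^ 2) * / M.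
Proof.
  intros HM. rewrite rho_pos by auto.
  assert (H1 := PI2_pos).
  assert (Hs : 0 <= sqrt (1 - 4 * m ^ 2 / M) <= 1).
  { split; [apply sqrt_pos|].
    destruct (Rle_dec (1 - 4 * m ^ 2 / M) 0). { rewrite sqrt_neg_0 by auto. lra. }
    apply Rle_trans with (sqrt 1); [|rewrite sqrt_1; lra].
    apply sqrt_le_1_alt. assert (0 <= m ^ 2) by apply pow2_ge_0. assert (0 <= 4 * m ^ 2 / M) by (apply Rdiv_le_0_compat; lra). lra. }
  assert (0 < / (16 * PI ^ 2)) by (apply Rinv_0_lt_compat; lra).
  assert (0 < / M) by (apply Rinv_0_lt_compat; lra).
  split. { apply Rmult_le_pos; [apply Rmult_le_pos|]; lra. }
  rewrite Rmult_assoc, (Rmult_comm (sqrt _)), <- Rmult_assoc.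
  rewrite <- (Rmult_1_r (/ (16 * PI ^ 2) * / M)) at 2.
  apply Rmult_le_compat_l; [|lra]. apply Rmult_le_pos; lra.
Qed.

Lemma rho_nonneg m M : 0 <= rho m M.
Proof.
  destruct (Rlt_dec 0 M). { apply rho_bounds; auto. }
  unfold rho. destruct (Rle_dec (4*m^2) M); [|lra].
  assert (M = 0 \/ M < 0) as [E|E] by lra.
  - subst M. rewrite Rinv_0. lra.
  - assert (0 <= 4 * m^2) by nra. lra.
Qed.

Lemma cont_mult_R (f g : R -> R) x : continuous f x -> continuous g x -> continuous (fun y => f y * g y) x.
Proof. intros. apply (@continuous_mult R_UniformSpace R_AbsRing); auto. Qed.

Lemma rho_cont m M : 0 < M -> continuous (rho m) M.
Proof.
  intros HM. apply continuous_ext_loc with (fun y => / (16 * PI ^ 2) * sqrt (1 - 4 * m ^ 2 / y) * / y).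
  - apply filter_imp with (2 := locally_pos M HM). intros y Hy. symmetry. apply rho_pos; auto.
  - apply cont_mult_R; [apply cont_mult_R|].
    + apply continuous_const.
    + apply continuous_sqrt_comp. apply (@ex_derive_continuous R_AbsRing R_NormedModule). auto_derive. lra.
    + apply (@ex_derive_continuous R_AbsRing R_NormedModule). auto_derive. lra.
Qed.


Lemma C_RInt_fst (f : R -> C) a b l : @is_RInt C_R_NormedModule f a b l ->
  is_RInt (fun t => fst (f t)) a b (fst l).
Proof. intros H. apply (@is_RInt_fct_extend_fst R_NormedModule R_NormedModule). exact H. Qed.

Lemma C_RInt_snd (f : R -> C) a b l : @is_RInt C_R_NormedModule f a b l ->
  is_RInt (fun t => snd (f t)) a b (snd l).
Proof. intros H. apply (@is_RInt_fct_extend_snd R_NormedModule R_NormedModule). exact H. Qed.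

Lemma C_RInt_pair (f : R -> C) a b l : is_RInt (fun t => fst (f t)) a b (fst l) ->
  is_RInt (fun t => snd (f t)) a b (snd l) -> @is_RInt C_R_NormedModule f a b l.
Proof. destruct l as [l1 l2]. intros H1 H2. apply (@is_RInt_fct_extend_pair R_NormedModule R_NormedModule); auto. Qed.

Lemma is_RInt_lin2 (u v : R -> R) a b lu lv (p q : R) : is_RInt u a b lu -> is_RInt v a b lv ->
  is_RInt (fun t => p * u t + q * v t) a b (p * lu + q * lv).
Proof.
  intros H1 H2.
  exact (@is_RInt_plus R_NormedModule _ _ _ _ _ _ (@is_RInt_scal R_NormedModule _ _ _ p _ H1) (@is_RInt_scal R_NormedModule _ _ _ q _ H2)).
Qed.

Lemma is_RInt_Cmult (c : C) (f : R -> C) a b l : @is_RInt C_R_NormedModule f a b l ->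
  @is_RInt C_R_NormedModule (fun t => c * f t)%C a b (c * l)%C.
Proof.
  intros H. assert (H1 := C_RInt_fst _ _ _ _ H). assert (H2 := C_RInt_snd _ _ _ _ H).
  apply C_RInt_pair.
  - assert (H3 := is_RInt_lin2 _ _ _ _ _ _ (fst c) (- snd c) H1 H2).
    replace (fst c * fst l + - snd c * snd l) with (fst (c * l)%C) in H3 by (destruct c, l; unfold Cmult; simpl; ring).
    assert (E : forall x, fst c * fst (f x) + - snd c * snd (f x) = fst (c * f x)%C) by (intros; destruct c; unfold Cmult; simpl; ring).
    eapply is_RInt_ext; [intros x _; apply E | exact H3].
  - assert (H3 := is_RInt_lin2 _ _ _ _ _ _ (fst c) (snd c) H2 H1).
    replace (fst c * snd l + snd c * fst l) with (snd (c * l)%C) in H3 by (destruct c, l; unfold Cmult; simpl; ring).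
    assert (E : forall x, fst c * snd (f x) + snd c * fst (f x) = snd (c * f x)%C) by (intros; destruct c; unfold Cmult; simpl; ring).
    eapply is_RInt_ext; [intros x _; apply E | exact H3].
Qed.

Lemma is_RInt_Cconj (f : R -> C) a b l : @is_RInt C_R_NormedModule f a b l ->
  @is_RInt C_R_NormedModule (fun t => Cconj (f t)) a b (Cconj l).
Proof.
  intros H. assert (H1 := C_RInt_fst _ _ _ _ H). assert (H2 := C_RInt_snd _ _ _ _ H).
  apply C_RInt_pair; simpl.
  - exact H1.
  - apply (@is_RInt_opp R_NormedModule) in H2. exact H2.
Qed.

Lemma is_RInt_RtoC (u : R -> R) a b l : is_RInt u a b l ->
  @is_RInt C_R_NormedModule (fun t => RtoC (u t)) a b (RtoC l).
Proof.
  intros H. apply C_RInt_pair; simpl; auto.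
  apply (is_RInt_ext (fun _ => 0)). { intros; reflexivity. }
  pose proof (@is_RInt_const R_NormedModule a b 0) as H0.
  replace (@scal R_Ring (NormedModule.ModuleSpace R_AbsRing R_NormedModule) (b - a) 0) with 0 in H0.
  exact H0. unfold scal; simpl; unfold mult; simpl; ring.
Qed.

Lemma ball_C (l y : C) e : @ball C_R_NormedModule l e y -> Rabs (fst y - fst l) < e /\ Rabs (snd y - snd l) < e.
Proof. intros [H1 H2]. split; [exact H1| exact H2]. Qed.

Lemma ball_C' (l y : C) e : Rabs (fst y - fst l) < e -> Rabs (snd y - snd l) < e -> @ball C_R_NormedModule l e y.
Proof. intros H1 H2. split; [exact H1| exact H2]. Qed.

Lemma cont_CC (phi : C -> C) (l : C) (L : R) : 0 < L ->
  (forall z : C, Rabs (fst (phi z) - fst (phi l)) <= L * Rmax (Rabs (fst z - fst l)) (Rabs (snd z - snd l)) /\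
                 Rabs (snd (phi z) - snd (phi l)) <= L * Rmax (Rabs (fst z - fst l)) (Rabs (snd z - snd l))) ->
  @continuous C_R_NormedModule C_R_NormedModule phi l.
Proof.
  intros HL H P [eps HP].
  assert (He : 0 < eps / L) by (apply Rdiv_lt_0_compat; [apply cond_pos| lra]).
  exists (mkposreal _ He). intros y Hy. apply ball_C in Hy. simpl in Hy. apply HP.
  destruct (H y) as [A B].
  assert (Rmax (Rabs (fst y - fst l)) (Rabs (snd y - snd l)) < eps / L) by (apply Rmax_lub_lt; tauto).
  assert (L * (eps / L) = eps) by (field; lra).
  apply ball_C'; nra.
Qed.

Lemma cont_Cmult (c l : C) : @continuous C_R_NormedModule C_R_NormedModule (fun z => c * z)%C l.
Proof.
  apply cont_CC with (Rabs (fst c) + Rabs (snd c) + 1).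
  { assert (H1 := Rabs_pos (fst c)). assert (H2 := Rabs_pos (snd c)). lra. }
  intros z. destruct c as [c1 c2]; destruct z as [z1 z2]; destruct l as [l1 l2]. simpl.
  set (mx := Rmax (Rabs (z1 - l1)) (Rabs (z2 - l2))).
  assert (A1 : Rabs (z1 - l1) <= mx) by apply Rmax_l.
  assert (A2 : Rabs (z2 - l2) <= mx) by apply Rmax_r.
  assert (P1 := Rabs_pos c1). assert (P2 := Rabs_pos c2). assert (P3 := Rabs_pos (z1 - l1)).
  split.
  - replace (c1 * z1 - c2 * z2 - (c1 * l1 - c2 * l2)) with (c1 * (z1 - l1) + - (c2 * (z2 - l2))) by ring.
    eapply Rle_trans; [apply Rabs_triang|]. rewrite Rabs_Ropp, !Rabs_mult.
    assert (Rabs c1 * Rabs (z1 - l1) <= Rabs c1 * mx) by (apply Rmult_le_compat_l; auto).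
    assert (Rabs c2 * Rabs (z2 - l2) <= Rabs c2 * mx) by (apply Rmult_le_compat_l; auto).
    nra.
  - replace (c1 * z2 + c2 * z1 - (c1 * l2 + c2 * l1)) with (c1 * (z2 - l2) + c2 * (z1 - l1)) by ring.
    eapply Rle_trans; [apply Rabs_triang|]. rewrite !Rabs_mult.
    assert (Rabs c1 * Rabs (z2 - l2) <= Rabs c1 * mx) by (apply Rmult_le_compat_l; auto).
    assert (Rabs c2 * Rabs (z1 - l1) <= Rabs c2 * mx) by (apply Rmult_le_compat_l; auto).
    nra.
Qed.

Lemma cont_Cconj (l : C) : @continuous C_R_NormedModule C_R_NormedModule Cconj l.
Proof.
  apply cont_CC with 1; [lra|].
  intros z. destruct z as [z1 z2]; destruct l as [l1 l2]. simpl.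
  set (mx := Rmax (Rabs (z1 - l1)) (Rabs (z2 - l2))).
  assert (A1 : Rabs (z1 - l1) <= mx) by apply Rmax_l.
  assert (A2 : Rabs (z2 - l2) <= mx) by apply Rmax_r.
  split; [lra|]. replace (- z2 - - l2) with (- (z2 - l2)) by ring. rewrite Rabs_Ropp. lra.
Qed.

Lemma cont_fst (l : C) : @continuous C_R_NormedModule R_UniformSpace fst l.
Proof.
  intros P [eps HP]. exists eps. intros y Hy. apply ball_C in Hy. apply HP. exact (proj1 Hy).
Qed.

Lemma cont_RtoC (l : R) : @continuous R_UniformSpace C_R_NormedModule RtoC l.
Proof.
  intros P [eps HP]. exists eps. intros y Hy. apply ball_R in Hy. apply HP. apply ball_C'; simpl; auto.
  rewrite Rminus_0_r, Rabs_R0. apply cond_pos.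
Qed.


Section GenC.
Context {Fa Fb : (R -> Prop) -> Prop} {FFa : Filter Fa} {FFb : Filter Fb}.

Lemma gen_Cmult (c : C) (f : R -> C) (l : C) : @is_RInt_gen C_R_NormedModule f Fa Fb l ->
  @is_RInt_gen C_R_NormedModule (fun t => c * f t)%C Fa Fb (c * l)%C.
Proof. intros H. refine (gen_map f _ (fun z => c * z)%C Fa Fb l _ _ H); [intros a b y Hy; exact (is_RInt_Cmult c f a b y Hy) | apply cont_Cmult]. Qed.

Lemma gen_Cconj (f : R -> C) (l : C) : @is_RInt_gen C_R_NormedModule f Fa Fb l ->
  @is_RInt_gen C_R_NormedModule (fun t => Cconj (f t)) Fa Fb (Cconj l).
Proof. intros H. refine (gen_map f _ Cconj Fa Fb l _ _ H); [intros a b y Hy; exact (is_RInt_Cconj f a b y Hy) | apply cont_Cconj]. Qed.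

Lemma gen_fst (f : R -> C) (l : C) : @is_RInt_gen C_R_NormedModule f Fa Fb l ->
  @is_RInt_gen R_NormedModule (fun t => fst (f t)) Fa Fb (fst l).
Proof. intros H. refine (gen_map f _ fst Fa Fb l _ _ H); [intros a b y Hy; exact (C_RInt_fst f a b y Hy) | apply cont_fst]. Qed.

Lemma gen_RtoC (u : R -> R) (l : R) : @is_RInt_gen R_NormedModule u Fa Fb l ->
  @is_RInt_gen C_R_NormedModule (fun t => RtoC (u t)) Fa Fb (RtoC l).
Proof. intros H. refine (gen_map u _ RtoC Fa Fb l _ _ H); [intros a b y Hy; exact (is_RInt_RtoC u a b y Hy) | apply cont_RtoC]. Qed.

Lemma gen_ext_all {V : NormedModule R_AbsRing} (f g : R -> V) (l : V) : (forall x, f x = g x) ->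
  is_RInt_gen f Fa Fb l -> is_RInt_gen g Fa Fb l.
Proof.
  intros E. apply is_RInt_gen_ext; auto.
  apply (Filter_prod _ _ _ (fun _ => True) (fun _ => True)); try apply filter_true.
  intros; apply E.
Qed.

End GenC.

Definition fJ m g := fun M : R => (RtoC (rho m M) / (RtoC M - g))%C.

Lemma den_pos m x y t : 0 < m -> inD m (x, y) -> 4 * m ^ 2 <= t -> 0 < (t - x) ^ 2 + y ^ 2.
Proof.
  intros Hm HD Ht. unfold inD in HD; simpl in HD.
  assert (0 <= (t - x) ^ 2) by apply pow2_ge_0.
  destruct HD as [Hy | [Hy Hx]].
  - assert (H2 := Rsqr_pos_lt y Hy). unfold Rsqr in H2. simpl. lra.
  - subst y. assert (0 < t - x) by lra. simpl. nra.
Qed.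

Lemma fJ_fst m x y t : fst (fJ m (x, y) t) = rho m t * ((t - x) / ((t - x) ^ 2 + y ^ 2)).
Proof.
  unfold fJ, Cdiv, Cmult, Cinv, Cminus, Cplus, Copp, RtoC. simpl.
  assert (E : (t + - x) * ((t + - x) * 1) + (0 + - y) * ((0 + - y) * 1) = (t - x) * ((t - x) * 1) + y * (y * 1)) by ring.
  rewrite E. unfold Rdiv. ring.
Qed.

Lemma fJ_snd m x y t : snd (fJ m (x, y) t) = rho m t * (y / ((t - x) ^ 2 + y ^ 2)).
Proof.
  unfold fJ, Cdiv, Cmult, Cinv, Cminus, Cplus, Copp, RtoC. simpl.
  assert (E : (t + - x) * ((t + - x) * 1) + (0 + - y) * ((0 + - y) * 1) = (t - x) * ((t - x) * 1) + y * (y * 1)) by ring.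
  rewrite E. unfold Rdiv. ring.
Qed.

Lemma fJ_exRInt m g b : 0 < m -> inD m g -> 4 * m ^ 2 <= b ->
  @ex_RInt C_R_NormedModule (fJ m g) (4 * m ^ 2) b.
Proof.
  intros Hm HD Hb. destruct g as [x y].
  assert (H4 : 0 < 4 * m ^ 2) by (apply Rmult_lt_0_compat; [lra| apply pow_lt; lra]).
  apply (@ex_RInt_fct_extend_pair R_NormedModule R_NormedModule).
  - apply (ex_RInt_ext (fun t => rho m t * ((t - x) / ((t - x) ^ 2 + y ^ 2)))).
    { intros; symmetry; apply fJ_fst. }
    apply (@ex_RInt_continuous R_CompleteNormedModule).
    intros z Hz. rewrite Rmin_left in Hz by lra. rewrite Rmax_right in Hz by lra.
    apply cont_mult_R; [apply rho_cont; lra|].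
    assert (0 < (z - x) ^ 2 + y ^ 2) by (apply (den_pos m); auto; lra).
    apply (@ex_derive_continuous R_AbsRing R_NormedModule). auto_derive. lra.
  - apply (ex_RInt_ext (fun t => rho m t * (y / ((t - x) ^ 2 + y ^ 2)))).
    { intros; symmetry; apply fJ_snd. }
    apply (@ex_RInt_continuous R_CompleteNormedModule).
    intros z Hz. rewrite Rmin_left in Hz by lra. rewrite Rmax_right in Hz by lra.
    apply cont_mult_R; [apply rho_cont; lra|].
    assert (0 < (z - x) ^ 2 + y ^ 2) by (apply (den_pos m); auto; lra).
    apply (@ex_derive_continuous R_AbsRing R_NormedModule). auto_derive. lra.
Qed.

Lemma Cmod_pos_neq (z : C) : 0 < Cmod z -> z <> 0%C.
Proof. intros H E. rewrite E, Cmod_0 in H. lra. Qed.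

Lemma fJ_bound m g : 0 < m -> inD m g ->
  exists K, forall t, 4 * m ^ 2 <= t -> Cmod (fJ m g t) <= K / t ^ 2.
Proof.
  intros Hm HD. destruct (inD_sep m g Hm HD) as [d [Hd Hsep]].
  assert (H4 : 0 < 4 * m ^ 2) by (apply Rmult_lt_0_compat; [lra| apply pow_lt; lra]).
  exists (/ (16 * PI ^ 2) / d). intros t Ht.
  assert (Ht0 : 0 < t) by lra.
  assert (Hs := Hsep t Ht).
  assert (Hdt : 0 < d * t) by (apply Rmult_lt_0_compat; lra).
  unfold fJ. rewrite Cmod_div by (apply Cmod_pos_neq; lra).
  rewrite Cmod_R. destruct (rho_bounds m t Ht0) as [R1 R2]. rewrite Rabs_pos_eq by auto.
  assert (HP := PI2_pos).
  apply Rle_trans with ((/ (16 * PI ^ 2) * / t) / (d * t)).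
  - unfold Rdiv. apply Rmult_le_compat; auto.
    + left. apply Rinv_0_lt_compat. lra.
    + apply Rinv_le_contravar; lra.
  - right. field. assert (PI > 0) by apply PI_RGT_0. repeat split; lra.
Qed.

Lemma J_is m g : 0 < m -> inD m g ->
  @is_RInt_gen C_R_NormedModule (fJ m g) (at_point (4 * m ^ 2)) (Rbar_locally p_infty) (J m g).
Proof.
  intros Hm HD. unfold J.
  apply (@RInt_gen_correct C_R_CompleteNormedModule); try typeclasses eauto.
  destruct (fJ_bound m g Hm HD) as [K HK].
  apply (@cmp_ex C_R_CompleteNormedModule _ _ K).
  - apply Rmult_lt_0_compat; [lra| apply pow_lt; lra].
  - intros b Hb. apply fJ_exRInt; auto.
  - intros x Hx. rewrite <- Cmod_norm. apply HK; auto.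
Qed.

Lemma Cconj_pair (z : C) : Cconj z = (fst z, - snd z).
Proof. destruct z; reflexivity. Qed.

Lemma fJ_conj m x y t : fJ m (x, -y) t = Cconj (fJ m (x, y) t).
Proof.
  rewrite Cconj_pair. apply injective_projections; cbn [fst snd].
  - rewrite !fJ_fst. replace ((-y)^2) with (y^2) by ring. reflexivity.
  - rewrite !fJ_snd. replace ((-y)^2) with (y^2) by ring. unfold Rdiv. ring.
Qed.

Lemma inD_conj m g : inD m g -> inD m (Cconj g).
Proof.
  destruct g as [x y]. unfold inD, Cconj; simpl. intros [H|[H1 H2]].
  - left. intro E. apply H. lra.
  - right. split; lra.
Qed.

Lemma J_conj m g : 0 < m -> inD m g -> J m (Cconj g) = Cconj (J m g).
Proof.
  intros Hm HD.
  assert (H := J_is m (Cconj g) Hm (inD_conj m g HD)).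
  assert (H2 := @gen_Cconj _ _ _ _ _ _ (J_is m g Hm HD)).
  destruct g as [x y].
  apply (gen_ext_all _ (fJ m (Cconj (x, y)))) in H2; [| intros t; simpl; symmetry; apply fJ_conj].
  rewrite <- (@is_RInt_gen_unique C_R_CompleteNormedModule _ _ _ _ _ _ H2).
  rewrite <- (@is_RInt_gen_unique C_R_CompleteNormedModule _ _ _ _ _ _ H).
  reflexivity.
Qed.


Lemma cont_sq_comp (F : R -> R) c p : (forall M, c <= M -> continuous F M) ->
  continuous (fun p => F (p ^ 2 + c)) p.
Proof.
  intros HF.
  apply (@continuous_comp R_UniformSpace R_UniformSpace R_UniformSpace (fun p => p ^ 2 + c) F).
  - apply (@ex_derive_continuous R_AbsRing R_NormedModule). auto_derive. auto.
  - apply HF. assert (0 <= p ^ 2) by apply pow2_ge_0. lra.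
Qed.

Lemma cont_abs_sq (F : R -> R) c p : (forall M, c <= M -> continuous F M) ->
  continuous (fun p => Rabs p * F (p ^ 2 + c)) p.
Proof.
  intros HF. apply cont_mult_R; [apply continuous_Rabs | apply cont_sq_comp; auto].
Qed.

Lemma sq_to_infty c : filterlim (fun b => b ^ 2 + c) (Rbar_locally p_infty) (Rbar_locally p_infty).
Proof.
  intros P [N HN]. exists (Rabs N + Rabs c + 1). intros b Hb. apply HN.
  assert (H1 := Rle_abs N). assert (H2 := Rabs_pos N). assert (H3 := Rle_abs (-c)). rewrite Rabs_Ropp in H3.
  assert (H5 := Rabs_pos c). assert (1 < b) by lra. assert (b <= b ^ 2) by (simpl; nra). lra.
Qed.

Lemma sub_gen (F : R -> R) c L : 0 < c -> (forall M, c <= M -> continuous F M) ->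
  is_RInt_gen F (at_point c) (Rbar_locally p_infty) L ->
  is_RInt_gen (fun p => Rabs p * F (p ^ 2 + c)) (at_point 0) (Rbar_locally p_infty) (L / 2).
Proof.
  intros Hc HF HL.
  apply (@gen_of_lim R_CompleteNormedModule); [apply Rbar_locally_filter| |].
  - exists 0. intros b Hb. apply (@ex_RInt_continuous R_CompleteNormedModule).
    intros z _. apply cont_abs_sq; auto.
  - apply (filterlim_ext_loc (fun b => / 2 * RInt F c (b ^ 2 + c))).
    + exists 0. intros b Hb.
      assert (H1 := @is_RInt_comp R_CompleteNormedModule F (fun p => p ^ 2 + c) (fun p => 2 * p) 0 b).
      assert (H2 : is_RInt (fun y => scal (2 * y) (F (y ^ 2 + c))) 0 b (RInt F (0 ^ 2 + c) (b ^ 2 + c))).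
      { apply H1.
        - intros x Hx. apply HF. assert (0 <= x ^ 2) by apply pow2_ge_0. lra.
        - intros x Hx. split.
          + auto_derive; auto. ring.
          + apply (@ex_derive_continuous R_AbsRing R_NormedModule). auto_derive. auto. }
      replace (0 ^ 2 + c) with c in H2 by ring.
      apply (@is_RInt_scal R_NormedModule _ _ _ (/ 2)) in H2.
      symmetry. apply (@is_RInt_unique R_CompleteNormedModule).
      eapply is_RInt_ext; [| exact H2].
      intros x Hx. rewrite Rmin_left in Hx by lra. rewrite Rmax_right in Hx by lra.
      rewrite Rabs_pos_eq by lra. unfold scal; simpl; unfold mult; simpl. field.
    + replace (L / 2) with (scal (/ 2) L) by (unfold scal; simpl; unfold mult; simpl; field).
      apply filterlim_comp with (locally L); [| apply (@filterlim_scal_r R_AbsRing R_NormedModule)].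
      apply filterlim_comp with (Rbar_locally p_infty); [apply sq_to_infty|].
      apply (@lim_of_gen R_CompleteNormedModule); [apply Rbar_locally_filter| exact HL].
Qed.


Definition Tf (n2 n1 n0 b be0 be1 be2 M : R) : R :=
  (n2 * M ^ 2 + n1 * M + n0) / (b * Pcub be0 be1 be2 M).

Definition Nc (n2 n1 n0 : R) (z : C) : C := (RtoC n2 * z * z + RtoC n1 * z + RtoC n0)%C.

Definition wc (n2 n1 n0 b : R) (g0 g1 g2 : C) : C :=
  (Nc n2 n1 n0 g0 / (RtoC b * ((g0 - g1) * (g0 - g2))))%C.

Lemma Cminus_neq (x y : C) : x <> y -> (x - y)%C <> 0%C.
Proof. intros H E. apply H. replace x with ((x - y) + y)%C by ring. rewrite E. ring. Qed.

Lemma RtoC_neq (b : R) : b <> 0 -> RtoC b <> 0%C.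
Proof. intros H E. apply H. apply (f_equal fst) in E. exact E. Qed.

Lemma Pcub_C g0 g1 g2 be0 be1 be2 M :
  RtoC be0 = (- (g0 * g1 * g2))%C -> RtoC be1 = (g0 * g1 + g0 * g2 + g1 * g2)%C ->
  RtoC be2 = (- (g0 + g1 + g2))%C ->
  RtoC (Pcub be0 be1 be2 M) = ((RtoC M - g0) * (RtoC M - g1) * (RtoC M - g2))%C.
Proof.
  intros H0 H1 H2. unfold Pcub.
  replace (M ^ 3 + be2 * M ^ 2 + be1 * M + be0) with (M * M * M + be2 * (M * M) + be1 * M + be0) by ring.
  rewrite !RtoC_plus, !RtoC_mult. rewrite H0, H1, H2. ring.
Qed.

Lemma sep_neq m g M : 0 < m -> inD m g -> 4 * m ^ 2 <= M -> (RtoC M - g)%C <> 0%C.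
Proof.
  intros Hm HD HM. destruct (inD_sep m g Hm HD) as [d [Hd H]].
  apply Cmod_pos_neq. assert (0 < 4 * m ^ 2) by (apply Rmult_lt_0_compat; [lra| apply pow_lt; lra]).
  assert (0 < d * M) by (apply Rmult_lt_0_compat; lra). specialize (H M HM). lra.
Qed.

Lemma Pcub_ne m g0 g1 g2 be0 be1 be2 M : 0 < m -> inD m g0 -> inD m g1 -> inD m g2 ->
  RtoC be0 = (- (g0 * g1 * g2))%C -> RtoC be1 = (g0 * g1 + g0 * g2 + g1 * g2)%C ->
  RtoC be2 = (- (g0 + g1 + g2))%C -> 4 * m ^ 2 <= M -> Pcub be0 be1 be2 M <> 0.
Proof.
  intros Hm D0 D1 D2 H0 H1 H2 HM E.
  assert (EC := Pcub_C g0 g1 g2 be0 be1 be2 M H0 H1 H2). rewrite E in EC.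
  apply (Cmult_neq_0 _ _ (Cmult_neq_0 _ _ (sep_neq m g0 M Hm D0 HM) (sep_neq m g1 M Hm D1 HM)) (sep_neq m g2 M Hm D2 HM)).
  rewrite <- EC. reflexivity.
Qed.

Lemma PF_id m g0 g1 g2 be0 be1 be2 n2 n1 n0 b M : 0 < m -> inD m g0 -> inD m g1 -> inD m g2 ->
  g0 <> g1 -> g0 <> g2 -> g1 <> g2 ->
  RtoC be0 = (- (g0 * g1 * g2))%C -> RtoC be1 = (g0 * g1 + g0 * g2 + g1 * g2)%C ->
  RtoC be2 = (- (g0 + g1 + g2))%C -> b <> 0 -> 4 * m ^ 2 <= M ->
  RtoC (Tf n2 n1 n0 b be0 be1 be2 M) =
  (wc n2 n1 n0 b g0 g1 g2 / (RtoC M - g0) + wc n2 n1 n0 b g1 g0 g2 / (RtoC M - g1)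
   + wc n2 n1 n0 b g2 g0 g1 / (RtoC M - g2))%C.
Proof.
  intros Hm D0 D1 D2 N01 N02 N12 H0 H1 H2 Hb HM.
  assert (HP := Pcub_ne m g0 g1 g2 be0 be1 be2 M Hm D0 D1 D2 H0 H1 H2 HM).
  assert (EP := Pcub_C g0 g1 g2 be0 be1 be2 M H0 H1 H2).
  assert (S0 := sep_neq m g0 M Hm D0 HM). assert (S1 := sep_neq m g1 M Hm D1 HM). assert (S2 := sep_neq m g2 M Hm D2 HM).
  assert (E01 := Cminus_neq _ _ N01). assert (E02 := Cminus_neq _ _ N02). assert (E12 := Cminus_neq _ _ N12).
  assert (E10 : (g1 - g0)%C <> 0%C) by (apply Cminus_neq; auto).
  assert (E20 : (g2 - g0)%C <> 0%C) by (apply Cminus_neq; auto).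
  assert (E21 : (g2 - g1)%C <> 0%C) by (apply Cminus_neq; auto).
  assert (Bn := RtoC_neq b Hb).
  unfold Tf. unfold Rdiv. rewrite RtoC_mult, RtoC_inv by (apply Rmult_integral_contrapositive; auto).
  rewrite RtoC_mult, EP.
  replace (n2 * M ^ 2 + n1 * M + n0) with (n2 * M * M + n1 * M + n0) by ring.
  rewrite !RtoC_plus, !RtoC_mult.
  unfold wc, Nc. field. repeat split; auto.
Qed.

Lemma frac_bound m g (w : C) : 0 < m -> inD m g -> 
  exists d, 0 < d /\ forall M, 4 * m ^ 2 <= M -> Cmod (w / (RtoC M - g))%C <= (Cmod w / d) / M.
Proof.
  intros Hm HD. destruct (inD_sep m g Hm HD) as [d [Hd H]]. exists d. split; auto.
  intros M' HM. assert (0 < 4 * m ^ 2) by (apply Rmult_lt_0_compat; [lra| apply pow_lt; lra]).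
  assert (Hdm : 0 < d * M') by (apply Rmult_lt_0_compat; lra). specialize (H M' HM).
  rewrite Cmod_div by (apply Cmod_pos_neq; lra).
  apply Rle_trans with (Cmod w / (d * M')).
  - unfold Rdiv. apply Rmult_le_compat_l; [apply Cmod_ge_0|]. apply Rinv_le_contravar; lra.
  - right. field. lra.
Qed.

Lemma T_bound m g0 g1 g2 be0 be1 be2 n2 n1 n0 b : 0 < m -> inD m g0 -> inD m g1 -> inD m g2 ->
  g0 <> g1 -> g0 <> g2 -> g1 <> g2 ->
  RtoC be0 = (- (g0 * g1 * g2))%C -> RtoC be1 = (g0 * g1 + g0 * g2 + g1 * g2)%C ->
  RtoC be2 = (- (g0 + g1 + g2))%C -> b <> 0 ->
  exists C, forall M, 4 * m ^ 2 <= M -> Rabs (Tf n2 n1 n0 b be0 be1 be2 M) <= C / M.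
Proof.
  intros Hm D0 D1 D2 N01 N02 N12 H0 H1 H2 Hb.
  destruct (frac_bound m g0 (wc n2 n1 n0 b g0 g1 g2) Hm D0) as [d0 [Hd0 B0]].
  destruct (frac_bound m g1 (wc n2 n1 n0 b g1 g0 g2) Hm D1) as [d1 [Hd1 B1]].
  destruct (frac_bound m g2 (wc n2 n1 n0 b g2 g0 g1) Hm D2) as [d2 [Hd2 B2]].
  exists (Cmod (wc n2 n1 n0 b g0 g1 g2) / d0 + Cmod (wc n2 n1 n0 b g1 g0 g2) / d1 + Cmod (wc n2 n1 n0 b g2 g0 g1) / d2).
  intros M HM. assert (0 < 4 * m ^ 2) by (apply Rmult_lt_0_compat; [lra| apply pow_lt; lra]).
  rewrite <- Cmod_R. rewrite (PF_id m g0 g1 g2 be0 be1 be2 n2 n1 n0 b M) by auto.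
  eapply Rle_trans; [apply Cmod_triangle|].
  eapply Rle_trans; [apply Rplus_le_compat_r; apply Cmod_triangle|].
  specialize (B0 M HM). specialize (B1 M HM). specialize (B2 M HM).
  apply Rle_trans with (Cmod (wc n2 n1 n0 b g0 g1 g2) / d0 / M + Cmod (wc n2 n1 n0 b g1 g0 g2) / d1 / M + Cmod (wc n2 n1 n0 b g2 g0 g1) / d2 / M); [lra|].
  right. field. lra.
Qed.

Lemma w_bound m C r t x : 0 < m -> 1 <= x ->
  0 <= r <= / (16 * PI ^ 2) * / (x ^ 2 + 4 * m ^ 2) -> Rabs t <= C / (x ^ 2 + 4 * m ^ 2) ->
  (1 + x ^ 2) ^ 2 * (2 * PI * (Rabs x * (r * t))) ^ 2 <=
  (4 * PI ^ 2 * (/ (16 * PI ^ 2)) ^ 2 * C ^ 2 * (1 + / (4 * m ^ 2)) ^ 2) / x ^ 2.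
Proof.
  intros Hm Hx [Hr0 Hr] Ht.
  set (M := x ^ 2 + 4 * m ^ 2) in *.
  set (c0 := / (16 * PI ^ 2)) in *.
  set (k := 1 + / (4 * m ^ 2)).
  assert (H4 : 0 < 4 * m ^ 2) by (apply Rmult_lt_0_compat; [lra| apply pow_lt; lra]).
  assert (Hv : 1 <= x ^ 2) by (simpl; nra).
  assert (HM : 0 < M) by (unfold M; lra).
  assert (Hc0 : 0 < c0) by (unfold c0; apply Rinv_0_lt_compat; apply PI2_pos).
  assert (HC : 0 <= C).
  { assert (0 <= C / M) by (eapply Rle_trans; [apply Rabs_pos| exact Ht]).
    assert (C = C / M * M) by (field; lra). nra. }
  assert (Hrt : Rabs (r * t) <= c0 * C / (M * M)).
  { rewrite Rabs_mult, Rabs_pos_eq by auto.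
    apply Rle_trans with ((c0 * / M) * (C / M)).
    - apply Rmult_le_compat; auto. apply Rabs_pos.
    - right. field. lra. }
  assert (Hrt2 := pow_maj_Rabs _ _ 2 Hrt).
  assert (Hu : 1 + x ^ 2 <= k * M).
  { unfold k, M. assert (x ^ 2 <= x ^ 2 / (4 * m ^ 2) * (4 * m ^ 2) ) by (right; field; lra).
    assert (E : (1 + / (4 * m ^ 2)) * (x ^ 2 + 4 * m ^ 2) = x ^ 2 + 4 * m ^ 2 + x ^ 2 / (4 * m ^ 2) + 1) by (field; lra).
    rewrite E. assert (0 <= x ^ 2 / (4 * m ^ 2)) by (apply Rdiv_le_0_compat; lra). lra. }
  assert (Hvm : x ^ 2 <= M) by (unfold M; lra).
  replace ((1 + x ^ 2) ^ 2 * (2 * PI * (Rabs x * (r * t))) ^ 2)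
    with (4 * PI ^ 2 * ((1 + x ^ 2) ^ 2 * x ^ 2) * (r * t) ^ 2)
    by (rewrite <- (pow2_abs x); ring).
  assert (HP := PI_RGT_0).
  apply Rle_trans with (4 * PI ^ 2 * ((1 + x ^ 2) ^ 2 * x ^ 2) * (c0 * C / (M * M)) ^ 2).
  { apply Rmult_le_compat_l; auto. apply Rmult_le_pos; [nra|]. apply Rmult_le_pos; [apply pow2_ge_0| lra]. }
  assert (Huv : (1 + x ^ 2) ^ 2 * x ^ 2 * x ^ 2 <= (k * M) ^ 2 * M * M).
  { apply Rmult_le_compat; [| lra | | lra].
    - apply Rmult_le_pos; [apply pow2_ge_0| lra].
    - apply Rmult_le_compat; [apply pow2_ge_0| lra | | lra]. apply pow_incr. split; [nra | lra]. }
  assert (E1 : 4 * PI ^ 2 * ((1 + x ^ 2) ^ 2 * x ^ 2) * (c0 * C / (M * M)) ^ 2 =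
               (4 * PI ^ 2 * c0 ^ 2 * C ^ 2 / (M * M * M * M)) * ((1 + x ^ 2) ^ 2 * x ^ 2 * x ^ 2) / x ^ 2)
    by (field; split; lra).
  assert (E2 : 4 * PI ^ 2 * c0 ^ 2 * C ^ 2 * k ^ 2 / x ^ 2 =
               (4 * PI ^ 2 * c0 ^ 2 * C ^ 2 / (M * M * M * M)) * ((k * M) ^ 2 * M * M) / x ^ 2)
    by (field; split; lra).
  rewrite E1, E2. unfold Rdiv. apply Rmult_le_compat_r; [left; apply Rinv_0_lt_compat; lra|].
  apply Rmult_le_compat_l; auto.
  apply Rmult_le_pos; [| left; apply Rinv_0_lt_compat; nra].
  apply Rmult_le_pos; [| nra]. apply Rmult_le_pos; [nra| ]. apply pow2_ge_0.
Qed.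


Lemma main_gen m g0 g1 g2 be0 be1 be2 n2 n1 n0 b (hh : R -> R) :
  0 < m -> inD m g0 -> inD m g1 -> inD m g2 -> g0 <> g1 -> g0 <> g2 -> g1 <> g2 ->
  RtoC be0 = (- (g0 * g1 * g2))%C -> RtoC be1 = (g0 * g1 + g0 * g2 + g1 * g2)%C ->
  RtoC be2 = (- (g0 + g1 + g2))%C -> b <> 0 ->
  (forall p, hh p = 2 * PI * (Rabs p * (rho m (p ^ 2 + 4 * m ^ 2) *
                         Tf n2 n1 n0 b be0 be1 be2 (p ^ 2 + 4 * m ^ 2)))) ->
  (wc n2 n1 n0 b g0 g1 g2 * J m g0 + wc n2 n1 n0 b g1 g0 g2 * J m g1
     + wc n2 n1 n0 b g2 g0 g1 * J m g2)%C = RtoC 1 ->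
  in_W22_fourier hh /\ inv_fourier_at hh 0 (RtoC 1).
Proof.
  intros Hm D0 D1 D2 N01 N02 N12 H0 H1 H2 Hb Hhh Hval.
  assert (H4 : 0 < 4 * m ^ 2) by (apply Rmult_lt_0_compat; [lra| apply pow_lt; lra]).
  assert (HPI := PI_RGT_0).
  set (T := Tf n2 n1 n0 b be0 be1 be2) in *.
  set (F := fun M => rho m M * T M).
  assert (HTc : forall M, 4 * m ^ 2 <= M -> continuous T M).
  { intros M HM. assert (HP := Pcub_ne m g0 g1 g2 be0 be1 be2 M Hm D0 D1 D2 H0 H1 H2 HM).
    unfold T, Tf. unfold Pcub in *. apply (@ex_derive_continuous R_AbsRing R_NormedModule).
    auto_derive. repeat split; auto; try (apply Rmult_integral_contrapositive; auto). }
  assert (HFc : forall M, 4 * m ^ 2 <= M -> continuous F M).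
  { intros M HM; unfold F; apply cont_mult_R; [apply rho_cont; lra | auto]. }
  set (w0 := wc n2 n1 n0 b g0 g1 g2) in *.
  set (w1 := wc n2 n1 n0 b g1 g0 g2) in *.
  set (w2 := wc n2 n1 n0 b g2 g0 g1) in *.
  assert (HC : @is_RInt_gen C_R_NormedModule
                 (fun M => (w0 * fJ m g0 M + w1 * fJ m g1 M) + w2 * fJ m g2 M)%C
                 (at_point (4 * m ^ 2)) (Rbar_locally p_infty)
                 (w0 * J m g0 + w1 * J m g1 + w2 * J m g2)%C).
  { apply (@is_RInt_gen_plus C_R_NormedModule); try typeclasses eauto.
    - apply (@is_RInt_gen_plus C_R_NormedModule); try typeclasses eauto.
      + apply gen_Cmult. apply J_is; auto.
      + apply gen_Cmult. apply J_is; auto.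
    - apply gen_Cmult. apply J_is; auto. }
  rewrite Hval in HC.
  apply gen_fst in HC.
  assert (HF : is_RInt_gen F (at_point (4 * m ^ 2)) (Rbar_locally p_infty) 1).
  { refine (is_RInt_gen_ext _ F _ _ HC).
    apply (Filter_prod _ _ _ (fun a => a = 4 * m ^ 2) (fun b => 4 * m ^ 2 < b)); [reflexivity | exists (4 * m ^ 2); auto |].
    intros a b' -> Hb' x Hx. simpl in Hx. rewrite Rmin_left, Rmax_right in Hx by lra.
    assert (E : (w0 * fJ m g0 x + w1 * fJ m g1 x + w2 * fJ m g2 x)%C = RtoC (rho m x * T x)).
    { rewrite RtoC_mult. unfold T. rewrite (PF_id m g0 g1 g2 be0 be1 be2 n2 n1 n0 b x Hm D0 D1 D2 N01 N02 N12 H0 H1 H2 Hb ltac:(lra)). unfold fJ.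
      fold w0 w1 w2. field. repeat split; apply (sep_neq m); auto; lra. }
    cbv beta. rewrite E. reflexivity. }
  assert (Hs := sub_gen F (4 * m ^ 2) 1 H4 HFc HF).
  set (G := fun p => Rabs p * F (p ^ 2 + 4 * m ^ 2)) in *.
  assert (HGc : forall p, continuous G p) by (intros; apply cont_abs_sq; auto).
  assert (HGev : forall x, G (- x) = G x).
  { intros x. unfold G. rewrite Rabs_Ropp. replace ((- x) ^ 2) with (x ^ 2) by ring. reflexivity. }
  assert (HGex : forall b', ex_RInt G 0 b').
  { intros b'. apply (@ex_RInt_continuous R_CompleteNormedModule). intros; auto. }
  assert (Hwhole := @even_gen R_CompleteNormedModule G (1 / 2) HGev HGex Hs).
  assert (Hhc : forall p, continuous hh p).
  { intros p. apply (continuous_ext (fun p => 2 * PI * G p)).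
    { intros x. rewrite Hhh. reflexivity. }
    apply cont_mult_R; [apply continuous_const | auto]. }
  split.
  -
    set (w := fun p => (1 + p ^ 2) ^ 2 * hh p ^ 2).
    assert (Hwc : forall p, continuous w p).
    { intros p. apply cont_mult_R.
      - apply (@ex_derive_continuous R_AbsRing R_NormedModule). auto_derive. auto.
      - apply (@continuous_comp R_UniformSpace R_UniformSpace R_UniformSpace hh (fun y => y ^ 2)); auto.
        apply (@ex_derive_continuous R_AbsRing R_NormedModule). auto_derive. auto. }
    assert (Hwex : forall a b', ex_RInt w a b').
    { intros a b'. apply (@ex_RInt_continuous R_CompleteNormedModule). intros; auto. }
    destruct (T_bound m g0 g1 g2 be0 be1 be2 n2 n1 n0 b Hm D0 D1 D2 N01 N02 N12 H0 H1 H2 Hb) as [C HTb].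
    assert (Hw1 : ex_RInt_gen w (at_point 1) (Rbar_locally p_infty)).
    { apply (@cmp_ex R_CompleteNormedModule w 1 (4 * PI ^ 2 * (/ (16 * PI ^ 2)) ^ 2 * C ^ 2 * (1 + / (4 * m ^ 2)) ^ 2)).
      - lra.
      - intros; auto.
      - intros x Hx. unfold w. rewrite Hhh.
        assert (HM : 0 < x ^ 2 + 4 * m ^ 2) by (assert (0 <= x ^ 2) by apply pow2_ge_0; lra).
        assert (HM' : 4 * m ^ 2 <= x ^ 2 + 4 * m ^ 2) by (assert (0 <= x ^ 2) by apply pow2_ge_0; lra).
        change (norm ?z) with (Rabs z).
        rewrite Rabs_pos_eq by (apply Rmult_le_pos; apply pow2_ge_0).
        apply w_bound; auto. apply rho_bounds; auto. }
    assert (Hw0 : is_RInt_gen w (at_point 0) (Rbar_locally p_infty)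
                    (plus (RInt w 0 1) (RInt_gen w (at_point 1) (Rbar_locally p_infty)))).
    { apply (@is_RInt_gen_Chasles R_NormedModule) with 1; try typeclasses eauto.
      - apply is_RInt_gen_at_point. apply (@RInt_correct R_CompleteNormedModule). auto.
      - apply (@RInt_gen_correct R_CompleteNormedModule); try typeclasses eauto. auto. }
    assert (Hwev : forall x, w (- x) = w x).
    { intros x. unfold w. rewrite !Hhh. rewrite Rabs_Ropp. replace ((- x) ^ 2) with (x ^ 2) by ring. reflexivity. }
    eexists. apply (@even_gen R_CompleteNormedModule w _ Hwev (fun b' => Hwex 0 b') Hw0).
  -
    unfold inv_fourier_at.
    replace (RtoC 1) with (RtoC (plus (1 / 2) (1 / 2))) by (f_equal; unfold plus; simpl; field).
    apply gen_RtoC in Hwhole.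
    refine (gen_ext_all _ _ _ _ Hwhole).
    intros p. rewrite Rmult_0_r, cos_0, sin_0. rewrite Hhh. fold (F (p ^ 2 + 4 * m ^ 2)). fold (G p).
    unfold Cmult, RtoC. simpl. apply injective_projections; simpl; field; lra.
Qed.


Lemma h2_id m a1 a2 b2 be0 be1 be2 p : b2 <> 0 -> Pcub be0 be1 be2 (p ^ 2 + 4 * m ^ 2) <> 0 ->
  h2_hat m a1 a2 b2 be0 be1 be2 p = 2 * PI * (Rabs p * (rho m (p ^ 2 + 4 * m ^ 2) *
    Tf (- (a1 + a2) - be2) (a1 * a2 - be1) (- be0) b2 be0 be1 be2 (p ^ 2 + 4 * m ^ 2))).
Proof. intros Hb HP. unfold h2_hat, rhocheck_hat, Tf. cbv zeta. unfold Pcub in *. field. split; auto. Qed.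

Lemma h1_id m a1 a2 b1 b2 be0 be1 be2 p : 0 < m -> b1 <> 0 -> b2 <> 0 -> Pcub be0 be1 be2 (p ^ 2 + 4 * m ^ 2) <> 0 ->
  h1_hat m a1 a2 b1 b2 be0 be1 be2 p = 2 * PI * (Rabs p * (rho m (p ^ 2 + 4 * m ^ 2) *
    Tf (a1 * a2 - be1) (be1 * (a1 + a2) - be0 + a1 * a2 * be2) (be0 * (a1 + a2)) b1 be0 be1 be2 (p ^ 2 + 4 * m ^ 2))).
Proof.
  intros Hm Hb1 Hb2 HP.
  assert (HM : p ^ 2 + 4 * m ^ 2 <> 0) by (assert (0 <= p ^ 2) by apply pow2_ge_0; assert (0 < m ^ 2) by (apply pow_lt; lra); lra).
  unfold h1_hat, h2_hat, rhocheck_hat, Tf. cbv zeta. unfold Pcub in *. field. repeat split; auto.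
Qed.

Lemma h0_id m a1 a2 b0 b2 be0 be1 be2 p : 0 < m -> b0 <> 0 -> b2 <> 0 -> Pcub be0 be1 be2 (p ^ 2 + 4 * m ^ 2) <> 0 ->
  h0_hat m a1 a2 b0 b2 be0 be1 be2 p = 2 * PI * (Rabs p * (rho m (p ^ 2 + 4 * m ^ 2) *
    Tf (- be0) (be0 * (a1 + a2)) (- be0 * a1 * a2) b0 be0 be1 be2 (p ^ 2 + 4 * m ^ 2))).
Proof.
  intros Hm Hb0 Hb2 HP.
  assert (HM : p ^ 2 + 4 * m ^ 2 <> 0) by (assert (0 <= p ^ 2) by apply pow2_ge_0; assert (0 < m ^ 2) by (apply pow_lt; lra); lra).
  unfold h0_hat, h2_hat, rhocheck_hat, Tf. cbv zeta. unfold Pcub in *. field. repeat split; auto.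
Qed.


Ltac pushC := repeat first [rewrite RtoC_minus | rewrite RtoC_opp | rewrite RtoC_plus | rewrite RtoC_mult].

Lemma val_gen n2 n1 n0 b g0 g1 g2 J0 J1 J2 R0 R1 R2 :
  g0 <> g1 -> g0 <> g2 -> g1 <> g2 -> b <> 0 ->
  (Nc n2 n1 n0 g0 * J0 = R0)%C -> (Nc n2 n1 n0 g1 * J1 = R1)%C -> (Nc n2 n1 n0 g2 * J2 = R2)%C ->
  (R0 / (RtoC b * ((g0 - g1) * (g0 - g2))) + R1 / (RtoC b * ((g1 - g0) * (g1 - g2)))
    + R2 / (RtoC b * ((g2 - g0) * (g2 - g1))))%C = RtoC 1 ->
  (wc n2 n1 n0 b g0 g1 g2 * J0 + wc n2 n1 n0 b g1 g0 g2 * J1 + wc n2 n1 n0 b g2 g0 g1 * J2)%C = RtoC 1.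
Proof.
  intros N01 N02 N12 Hb K0 K1 K2 H. rewrite <- H, <- K0, <- K1, <- K2.
  assert (E01 := Cminus_neq _ _ N01). assert (E02 := Cminus_neq _ _ N02). assert (E12 := Cminus_neq _ _ N12).
  assert (E10 : (g1 - g0)%C <> 0%C) by (apply Cminus_neq; auto).
  assert (E20 : (g2 - g0)%C <> 0%C) by (apply Cminus_neq; auto).
  assert (E21 : (g2 - g1)%C <> 0%C) by (apply Cminus_neq; auto).
  assert (Bn := RtoC_neq b Hb).
  unfold wc. field. repeat split; auto.
Qed.

Section Vals.
Variables (a1 a2 b0 b1 b2 be0 be1 be2 : R) (g0 g1 g2 J0 J1 J2 : C).
Hypotheses (N01 : g0 <> g1) (N02 : g0 <> g2) (N12 : g1 <> g2)
  (Z0 : g0 <> 0%C) (Z1 : g1 <> 0%C) (Z2 : g2 <> 0%C)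
  (Hb0 : b0 <> 0) (Hb1 : b1 <> 0) (Hb2 : b2 <> 0)
  (H0 : RtoC be0 = (- (g0 * g1 * g2))%C) (H1 : RtoC be1 = (g0 * g1 + g0 * g2 + g1 * g2)%C)
  (H2 : RtoC be2 = (- (g0 + g1 + g2))%C)
  (Eq0 : (g0 * (RtoC a1 - g0) * (RtoC a2 - g0) * J0 = RtoC b0 + RtoC b1 * g0 + RtoC b2 * g0 * g0)%C)
  (Eq1 : (g1 * (RtoC a1 - g1) * (RtoC a2 - g1) * J1 = RtoC b0 + RtoC b1 * g1 + RtoC b2 * g1 * g1)%C)
  (Eq2 : (g2 * (RtoC a1 - g2) * (RtoC a2 - g2) * J2 = RtoC b0 + RtoC b1 * g2 + RtoC b2 * g2 * g2)%C).

Lemma val2 : (wc (- (a1 + a2) - be2) (a1 * a2 - be1) (- be0) b2 g0 g1 g2 * J0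
  + wc (- (a1 + a2) - be2) (a1 * a2 - be1) (- be0) b2 g1 g0 g2 * J1
  + wc (- (a1 + a2) - be2) (a1 * a2 - be1) (- be0) b2 g2 g0 g1 * J2)%C = RtoC 1.
Proof.
  apply (val_gen _ _ _ _ _ _ _ _ _ _ (RtoC b0 + RtoC b1 * g0 + RtoC b2 * g0 * g0)%C
    (RtoC b0 + RtoC b1 * g1 + RtoC b2 * g1 * g1)%C (RtoC b0 + RtoC b1 * g2 + RtoC b2 * g2 * g2)%C N01 N02 N12 Hb2).
  - rewrite <- Eq0. unfold Nc. pushC. rewrite H0, H1, H2. ring.
  - rewrite <- Eq1. unfold Nc. pushC. rewrite H0, H1, H2. ring.
  - rewrite <- Eq2. unfold Nc. pushC. rewrite H0, H1, H2. ring.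
  - assert (E01 := Cminus_neq _ _ N01). assert (E02 := Cminus_neq _ _ N02). assert (E12 := Cminus_neq _ _ N12).
    assert (E10 : (g1 - g0)%C <> 0%C) by (apply Cminus_neq; auto).
    assert (E20 : (g2 - g0)%C <> 0%C) by (apply Cminus_neq; auto).
    assert (E21 : (g2 - g1)%C <> 0%C) by (apply Cminus_neq; auto).
    assert (Bn := RtoC_neq b2 Hb2).
    field. repeat split; auto.
Qed.

Lemma val0 : (wc (- be0) (be0 * (a1 + a2)) (- be0 * a1 * a2) b0 g0 g1 g2 * J0
  + wc (- be0) (be0 * (a1 + a2)) (- be0 * a1 * a2) b0 g1 g0 g2 * J1
  + wc (- be0) (be0 * (a1 + a2)) (- be0 * a1 * a2) b0 g2 g0 g1 * J2)%C = RtoC 1.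
Proof.
  apply (val_gen _ _ _ _ _ _ _ _ _ _ (- RtoC be0 / g0 * (RtoC b0 + RtoC b1 * g0 + RtoC b2 * g0 * g0))%C
    (- RtoC be0 / g1 * (RtoC b0 + RtoC b1 * g1 + RtoC b2 * g1 * g1))%C
    (- RtoC be0 / g2 * (RtoC b0 + RtoC b1 * g2 + RtoC b2 * g2 * g2))%C N01 N02 N12 Hb0).
  - rewrite <- Eq0. unfold Nc. pushC. field. auto.
  - rewrite <- Eq1. unfold Nc. pushC. field. auto.
  - rewrite <- Eq2. unfold Nc. pushC. field. auto.
  - assert (E01 := Cminus_neq _ _ N01). assert (E02 := Cminus_neq _ _ N02). assert (E12 := Cminus_neq _ _ N12).
    assert (E10 : (g1 - g0)%C <> 0%C) by (apply Cminus_neq; auto).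
    assert (E20 : (g2 - g0)%C <> 0%C) by (apply Cminus_neq; auto).
    assert (E21 : (g2 - g1)%C <> 0%C) by (apply Cminus_neq; auto).
    assert (Bn := RtoC_neq b0 Hb0).
    rewrite H0. field. repeat split; auto.
Qed.

Lemma val1 : (wc (a1 * a2 - be1) (be1 * (a1 + a2) - be0 + a1 * a2 * be2) (be0 * (a1 + a2)) b1 g0 g1 g2 * J0
  + wc (a1 * a2 - be1) (be1 * (a1 + a2) - be0 + a1 * a2 * be2) (be0 * (a1 + a2)) b1 g1 g0 g2 * J1
  + wc (a1 * a2 - be1) (be1 * (a1 + a2) - be0 + a1 * a2 * be2) (be0 * (a1 + a2)) b1 g2 g0 g1 * J2)%C = RtoC 1.
Proof.
  apply (val_gen _ _ _ _ _ _ _ _ _ _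
    (- (g0 * RtoC be1 + RtoC be0) / (g0 * g0) * (RtoC b0 + RtoC b1 * g0 + RtoC b2 * g0 * g0))%C
    (- (g1 * RtoC be1 + RtoC be0) / (g1 * g1) * (RtoC b0 + RtoC b1 * g1 + RtoC b2 * g1 * g1))%C
    (- (g2 * RtoC be1 + RtoC be0) / (g2 * g2) * (RtoC b0 + RtoC b1 * g2 + RtoC b2 * g2 * g2))%C N01 N02 N12 Hb1).
  - rewrite <- Eq0. unfold Nc. pushC. rewrite H0, H1, H2. field. auto.
  - rewrite <- Eq1. unfold Nc. pushC. rewrite H0, H1, H2. field. auto.
  - rewrite <- Eq2. unfold Nc. pushC. rewrite H0, H1, H2. field. auto.
  - assert (E01 := Cminus_neq _ _ N01). assert (E02 := Cminus_neq _ _ N02). assert (E12 := Cminus_neq _ _ N12).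
    assert (E10 : (g1 - g0)%C <> 0%C) by (apply Cminus_neq; auto).
    assert (E20 : (g2 - g0)%C <> 0%C) by (apply Cminus_neq; auto).
    assert (E21 : (g2 - g1)%C <> 0%C) by (apply Cminus_neq; auto).
    assert (Bn := RtoC_neq b1 Hb1).
    rewrite H0, H1. field. repeat split; auto.
Qed.
End Vals.


Lemma conj_inj_eq (a b c : C) : Cconj a = c -> Cconj b = c -> a = b.
Proof. intros H1 H2. rewrite <- (Cconj_conj a), <- (Cconj_conj b), H1, H2. reflexivity. Qed.

Lemma conjR (a : R) : Cconj (RtoC a) = RtoC a.
Proof. unfold Cconj, RtoC; simpl. f_equal. ring. Qed.

Lemma real_part_eq (s : C) : Cconj s = s -> RtoC (fst s) = s.
Proof. destruct s as [x y]. unfold Cconj, RtoC; simpl. intro E. injection E; intros. f_equal. lra. Qed.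

Lemma sym_real (g0 g1 g2 : C) : g0 <> g1 -> g0 <> g2 -> g1 <> g2 ->
  (Cconj g0 = g0 \/ Cconj g0 = g1 \/ Cconj g0 = g2) ->
  (Cconj g1 = g0 \/ Cconj g1 = g1 \/ Cconj g1 = g2) ->
  (Cconj g2 = g0 \/ Cconj g2 = g1 \/ Cconj g2 = g2) ->
  Cconj (g0 + g1 + g2)%C = (g0 + g1 + g2)%C /\
  Cconj (g0 * g1 + g0 * g2 + g1 * g2)%C = (g0 * g1 + g0 * g2 + g1 * g2)%C /\
  Cconj (g0 * g1 * g2)%C = (g0 * g1 * g2)%C.
Proof.
  intros N01 N02 N12 H0 H1 H2. rewrite !Cplus_conj, !Cmult_conj.
  destruct H0 as [C0|[C0|C0]]; destruct H1 as [C1|[C1|C1]]; destruct H2 as [C2|[C2|C2]];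
  first [ rewrite C0, C1, C2; repeat split; ring
        | exfalso; first [ apply N01; exact (conj_inj_eq _ _ _ C0 C1)
                         | apply N02; exact (conj_inj_eq _ _ _ C0 C2)
                         | apply N12; exact (conj_inj_eq _ _ _ C1 C2) ] ].
Qed.

Theorem proposition4p7 (m a1 a2 b0 b1 b2 : R) (g0 g1 g2 : C) :
  0 < m -> b0 <> 0 -> b1 <> 0 -> b2 <> 0 ->
  inD m g0 -> inD m g1 -> inD m g2 ->
  g0 <> g1 -> g0 <> g2 -> g1 <> g2 ->
  (forall g : C, inD m g ->
     (g * (RtoC a1 - g) * (RtoC a2 - g) * J m g
        = RtoC b0 + RtoC b1 * g + RtoC b2 * g * g)%C
     <-> (g = g0 \/ g = g1 \/ g = g2)) ->
  exists be0 be1 be2 : R,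
    RtoC be0 = (- (g0 * g1 * g2))%C /\
    RtoC be1 = (g0 * g1 + g0 * g2 + g1 * g2)%C /\
    RtoC be2 = (- (g0 + g1 + g2))%C /\
    (forall M : R, 4 * m ^ 2 <= M -> Pcub be0 be1 be2 M <> 0) /\
    in_W22_fourier (h0_hat m a1 a2 b0 b2 be0 be1 be2) /\
    in_W22_fourier (h1_hat m a1 a2 b1 b2 be0 be1 be2) /\
    in_W22_fourier (h2_hat m a1 a2 b2 be0 be1 be2) /\
    inv_fourier_at (h0_hat m a1 a2 b0 b2 be0 be1 be2) 0 (RtoC 1) /\
    inv_fourier_at (h1_hat m a1 a2 b1 b2 be0 be1 be2) 0 (RtoC 1) /\
    inv_fourier_at (h2_hat m a1 a2 b2 be0 be1 be2) 0 (RtoC 1).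
Proof.
  intros Hm Hb0 Hb1 Hb2 D0 D1 D2 N01 N02 N12 Hsol.
  assert (H4 : 0 < 4 * m ^ 2) by (apply Rmult_lt_0_compat; [lra| apply pow_lt; lra]).
  assert (Eq0 := proj2 (Hsol g0 D0) (or_introl eq_refl)).
  assert (Eq1 := proj2 (Hsol g1 D1) (or_intror (or_introl eq_refl))).
  assert (Eq2 := proj2 (Hsol g2 D2) (or_intror (or_intror eq_refl))).
  assert (NZ : forall g, (g * (RtoC a1 - g) * (RtoC a2 - g) * J m g
        = RtoC b0 + RtoC b1 * g + RtoC b2 * g * g)%C -> g <> 0%C).
  { intros g E Eg. subst g. apply (RtoC_neq b0 Hb0).
    transitivity (RtoC b0 + RtoC b1 * 0 + RtoC b2 * 0 * 0)%C; [ring|]. rewrite <- E. ring. }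
  assert (Z0 := NZ _ Eq0). assert (Z1 := NZ _ Eq1). assert (Z2 := NZ _ Eq2).
  assert (CC : forall g, inD m g -> (g * (RtoC a1 - g) * (RtoC a2 - g) * J m g
        = RtoC b0 + RtoC b1 * g + RtoC b2 * g * g)%C ->
        Cconj g = g0 \/ Cconj g = g1 \/ Cconj g = g2).
  { intros g HD E. apply Hsol; [apply inD_conj; auto|]. rewrite J_conj by auto.
    apply (f_equal Cconj) in E. rewrite !Cplus_conj, !Cmult_conj, !Cminus_conj, !conjR in E. exact E. }
  destruct (sym_real g0 g1 g2 N01 N02 N12 (CC g0 D0 Eq0) (CC g1 D1 Eq1) (CC g2 D2 Eq2)) as [S2 [S1 S0]].
  exists (fst (- (g0 * g1 * g2))%C), (fst (g0 * g1 + g0 * g2 + g1 * g2)%C), (fst (- (g0 + g1 + g2))%C).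
  assert (H0 : RtoC (fst (- (g0 * g1 * g2))%C) = (- (g0 * g1 * g2))%C) by (apply real_part_eq; rewrite Copp_conj, S0; reflexivity).
  assert (H1 : RtoC (fst (g0 * g1 + g0 * g2 + g1 * g2)%C) = (g0 * g1 + g0 * g2 + g1 * g2)%C) by (apply real_part_eq; exact S1).
  assert (H2 : RtoC (fst (- (g0 + g1 + g2))%C) = (- (g0 + g1 + g2))%C) by (apply real_part_eq; rewrite Copp_conj, S2; reflexivity).
  set (be0 := fst (- (g0 * g1 * g2))%C) in *.
  set (be1 := fst (g0 * g1 + g0 * g2 + g1 * g2)%C) in *.
  set (be2 := fst (- (g0 + g1 + g2))%C) in *.
  assert (HP : forall M : R, 4 * m ^ 2 <= M -> Pcub be0 be1 be2 M <> 0).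
  { intros M HM. apply (Pcub_ne m g0 g1 g2); auto. }
  assert (HPp : forall p, Pcub be0 be1 be2 (p ^ 2 + 4 * m ^ 2) <> 0).
  { intros p. apply HP. assert (0 <= p ^ 2) by apply pow2_ge_0. lra. }
  assert (R0 : in_W22_fourier (h0_hat m a1 a2 b0 b2 be0 be1 be2) /\ inv_fourier_at (h0_hat m a1 a2 b0 b2 be0 be1 be2) 0 (RtoC 1)).
  { apply (main_gen m g0 g1 g2 be0 be1 be2 (- be0) (be0 * (a1 + a2)) (- be0 * a1 * a2) b0); auto.
    - intros p. apply h0_id; auto.
    - apply (val0 a1 a2 b0 b1 b2 be0 g0 g1 g2); auto. }
  assert (R1 : in_W22_fourier (h1_hat m a1 a2 b1 b2 be0 be1 be2) /\ inv_fourier_at (h1_hat m a1 a2 b1 b2 be0 be1 be2) 0 (RtoC 1)).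
  { apply (main_gen m g0 g1 g2 be0 be1 be2 (a1 * a2 - be1) (be1 * (a1 + a2) - be0 + a1 * a2 * be2) (be0 * (a1 + a2)) b1); auto.
    - intros p. apply h1_id; auto.
    - apply (val1 a1 a2 b0 b1 b2 be0 be1 be2 g0 g1 g2); auto. }
  assert (R2 : in_W22_fourier (h2_hat m a1 a2 b2 be0 be1 be2) /\ inv_fourier_at (h2_hat m a1 a2 b2 be0 be1 be2) 0 (RtoC 1)).
  { apply (main_gen m g0 g1 g2 be0 be1 be2 (- (a1 + a2) - be2) (a1 * a2 - be1) (- be0) b2); auto.
    - intros p. apply h2_id; auto.
    - apply (val2 a1 a2 b0 b1 b2 be0 be1 be2 g0 g1 g2); auto. }
  repeat split; tauto.
Qed.
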